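(* A rooted labeled forest that avoids $123$ avoids $2413$ if and only if it is a $P_1$-forest.
   Context: Rooted labeled forests are unordered forests with a distinguished root in each component and distinct integer labels $L(v)$. The ancestors of $v$ are the vertices on the path from the root of its component to $v$ (including $v$). An instance of a pattern $\pi$ of length $k$ is a sequence $v_1,\dots,v_k$ with $v_i$ a strict ancestor of $v_{i+1}$ and labels in the same relative order as $\pi$; a forest avoids $\pi$ if it has no instance. A vertex $v$ is a top-down minimum (TDM) if $L(u)\ge L(v)$ for every ancestor $u$ of $v$; other vertices are non-TDM. A non-TDM vertex $v$ is special if the path from the root to $v$ contains vertices $v_1,v_2,v_3,v_4$ in that order (not necessarily consecutive) with $v_1,v_3$ TDM and $v_2,v_4$ non-TDM. The ceiling of a special vertex $v$ is its lowest ancestor $u$ such that the path from $u$ to $v$ contains vertices $v_1,v_2,v_3,v_4$ in that order with $v_1,v_3$ TDM and $v_2,v_4$ non-TDM. A $P_1$-forest is a forest in which every special vertex $v$ with ceiling $u$ satisfies $L(u)>L(v)$. *)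

(* Defs.v *)
From mathcomp Require Import all_boot all_order all_algebra.
Set Implicit Arguments. Unset Strict Implicit. Unset Printing Implicit Defensive.
Import Order.TTheory GRing.Theory Num.Theory.

(* A rooted forest on a finite vertex type T is given by a parent map:
   parent v = None iff v is a root.  Labels L : T -> int (distinct). *)
Section Forest.
Variables (T : finType) (parent : T -> option T) (L : T -> int).

Fixpoint piter (k : nat) (v : T) : option T :=
  match k with
  | 0 => Some v
  | k'.+1 => if piter k' v is Some w then parent w else None
  end.

(* the parent map has no cycles: every vertex reaches a root *)
Definition is_forest : Prop := forall v, piter #|T| v = None.

Definition anc (u v : T) : Prop := exists k, piter k v = Some u.
Definition sanc (u v : T) : Prop := exists k, piter k.+1 v = Some u.

Definition contains (pi : seq nat) : Prop :=
  exists f : nat -> T,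
    (forall i, i.+1 < size pi -> sanc (f i) (f i.+1)) /\
    (forall i j, i < size pi -> j < size pi ->
       ((L (f i) < L (f j))%R = (nth 0 pi i < nth 0 pi j))).

Definition avoids (pi : seq nat) : Prop := ~ contains pi.

Definition TDM (v : T) : Prop := forall u, anc u v -> (L v <= L u)%R.

Definition has_pat (u v : T) : Prop :=
  exists v1 v2 v3 v4, [/\ anc u v1, sanc v1 v2, sanc v2 v3, sanc v3 v4
     & anc v4 v] /\ [/\ TDM v1, ~ TDM v2, TDM v3 & ~ TDM v4].

(* special vertex: non-TDM, and the root-to-v path contains the pattern
   (equivalently, some ancestor of v, e.g. the root, satisfies has_pat) *)
Definition special (v : T) : Prop :=
  ~ TDM v /\ exists v1 v2 v3 v4,
    [/\ sanc v1 v2, sanc v2 v3, sanc v3 v4 & anc v4 v] /\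
    [/\ TDM v1, ~ TDM v2, TDM v3 & ~ TDM v4].

Definition ceiling (u v : T) : Prop :=
  anc u v /\ has_pat u v /\ (forall w, sanc u w -> anc w v -> ~ has_pat w v).

Definition P1_forest : Prop :=
  forall u v, special v -> ceiling u v -> (L v < L u)%R.

End Forest.

(* Main.v *)
Require Import Defs.
From mathcomp Require Import all_boot all_order all_algebra.
From mathcomp Require Import zify.
From Stdlib Require Import Classical.
Import Order.TTheory GRing.Theory Num.Theory.

Section Aux.
Set Implicit Arguments.
Variables (T : finType) (parent : T -> option T) (L : T -> int).
Hypothesis Hf : is_forest parent.
Hypothesis Linj : injective L.

Local Notation piter := (piter parent).
Local Notation anc := (anc parent).
Local Notation sanc := (sanc parent).
Local Notation TDM := (TDM parent L).

Lemma piter_add i j z :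
  piter (i + j) z = if piter j z is Some y then piter i y else None.
Proof.
elim: i => [|i IH] /=; first by case: (piter j z).
rewrite IH; by case: (piter j z).
Qed.

Lemma piter_none m d z : piter m z = None -> piter (d + m) z = None.
Proof. by move=> H; rewrite piter_add H. Qed.

Lemma no_cycle k x : piter k.+1 x <> Some x.
Proof.
move=> H.
have Hn : forall n, piter (n * k.+1) x = Some x.
  elim=> [|n IH] //; by rewrite mulSn piter_add IH.
have := Hn #|T|.
have -> : #|T| * k.+1 = (#|T| * k) + #|T| by rewrite mulnS addnC.
by rewrite piter_none // Hf.
Qed.

Lemma depth_uniq i j v u : piter i v = Some u -> piter j v = Some u -> i = j.
Proof.
wlog lt : i j / i <= j.
  move=> W Hi Hj; case: (leqP i j) => c; first exact: W.
  by symmetry; apply: W Hj Hi; apply: ltnW.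
move=> Hi Hj; case: (ltngtP i j) lt => // c _.
have : piter ((j - i - 1).+1 + i) v = Some u.
  by have -> : (j - i - 1).+1 + i = j by lia.
by rewrite piter_add Hi => /no_cycle.
Qed.

Lemma sanc_neq x y : sanc x y -> x != y.
Proof. move=> [k Hk]; apply/eqP=> E; subst; exact: (@no_cycle _ _ Hk). Qed.

Lemma anc_trans x y z : anc x y -> anc y z -> anc x z.
Proof. by move=> [i Hi] [j Hj]; exists (i + j); rewrite piter_add Hj. Qed.

Lemma sanc_anc x y : sanc x y -> anc x y.
Proof. by move=> [k Hk]; exists k.+1. Qed.

Lemma anc_sanc_trans x y z : anc x y -> sanc y z -> sanc x z.
Proof. by move=> [i Hi] [j Hj]; exists (i + j); rewrite -addnS piter_add Hj. Qed.

Lemma sanc_anc_trans x y z : sanc x y -> anc y z -> sanc x z.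
Proof. by move=> [i Hi] [j Hj]; exists (i + j); rewrite -addSn piter_add Hj. Qed.

Lemma sanc_trans x y z : sanc x y -> sanc y z -> sanc x z.
Proof. by move=> H1 H2; apply: sanc_anc_trans H1 (sanc_anc H2). Qed.

Lemma anc_refl x : anc x x.
Proof. by exists 0. Qed.

Lemma anc_neq x y : anc x y -> x != y -> sanc x y.
Proof. by move=> [[|k] Hk] ne; [case: Hk ne => ->; rewrite eqxx | exists k]. Qed.

Lemma chain a b d : anc a d -> anc b d -> anc a b \/ sanc b a.
Proof.
move=> [i Hi] [j Hj]; case: (leqP j i) => c.
  left; exists (i - j); move: Hi; by rewrite -{1}(subnK c) piter_add Hj.
right; exists (j - i - 1).
have : piter ((j - i - 1).+1 + i) d = Some b.
  by have -> : (j - i - 1).+1 + i = j by lia.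
by rewrite piter_add Hi.
Qed.

Lemma least (P : nat -> Prop) n : P n -> exists k, P k /\ forall m, m < k -> ~ P m.
Proof.
elim/ltn_ind: n => n IH Pn.
case: (classic (exists m, m < n /\ P m)) => [[m [lt Pm]]|H].
  exact: IH m lt Pm.
by exists n; split => // m lt Pm; apply H; exists m.
Qed.

Lemma min_ex (P : T -> Prop) (f : T -> int) x0 :
  P x0 -> exists t, P t /\ forall y, P y -> (f t <= f y)%R.
Proof.
suff H : forall s : seq T, (exists x, x \in s /\ P x) ->
   exists t, P t /\ forall y, y \in s -> P y -> (f t <= f y)%R.
  move=> P0; have [|t [Pt Ht]] := H (enum T).
    by exists x0; rewrite mem_enum.
  by exists t; split=> // y; apply: Ht; rewrite mem_enum.
elim=> [|h s IH] [x [xs Px]]; first by [].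
case: (classic (exists x, x \in s /\ P x)) => [Hs|Hs].
  have [t [Pt Ht]] := IH Hs.
  case: (classic (P h)) => Ph.
    case: (leP (f h) (f t)) => c.
      exists h; split=> // y; rewrite inE => /orP [/eqP->|ys] Py //.
      exact: le_trans c (Ht y ys Py).
    exists t; split=> // y; rewrite inE => /orP [/eqP->|ys] Py.
      exact: ltW.
    exact: Ht.
  exists t; split=> // y; rewrite inE => /orP [/eqP->|ys] Py //.
  exact: Ht.
have xh : x = h.
  move: xs; rewrite inE => /orP [/eqP//|xs]; by case: Hs; exists x.
subst; exists h; split=> // y; rewrite inE => /orP [/eqP->|ys] Py //.
by case: Hs; exists y.
Qed.

Lemma nonTDM_dec x y : avoids parent L [:: 1; 2; 3] -> ~ TDM x -> sanc x y -> (L y < L x)%R.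
Proof.
move=> Hav nT sxy.
have [z [azx lzx]] : exists z, anc z x /\ (L z < L x)%R.
  apply: NNPP => H; apply: nT => u aux.
  case: (leP (L x) (L u)) => // c; case: H; by exists u.
have szx : sanc z x.
  have := @anc_neq z x azx; apply; apply/negP=> /eqP E; subst; by rewrite ltxx in lzx.
case: (ltgtP (L y) (L x)) => // c; last first.
  by move/Linj: c => E; subst; move: (sanc_neq sxy); rewrite eqxx.
case: Hav; exists (fun i => match i with 0 => z | 1 => x | _ => y end); split.
  by case=> [|[|]] //.
move=> i j; do 3?[case: i => [|i]] => //; do 3?[case: j => [|j]] => //= _ _; lia.
Qed.


Lemma dirA : avoids parent L [:: 1; 2; 3] ->
  avoids parent L [:: 2; 4; 1; 3] -> P1_forest parent L.
Proof.
move=> H123 H2413 u v [nTv _] [auv [[v1 [v2 [v3 [v4 [[a1 s12 s23 s34 a4v] [T1 nT2 T3 nT4]]]]]] _]].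
case: (ltP (L v) (L u)) => // c; exfalso.
have su2 : sanc u v2 := anc_sanc_trans a1 s12.
have s2v : sanc v2 v := sanc_anc_trans (sanc_trans s23 s34) a4v.
have s3v : sanc v3 v := sanc_anc_trans s34 a4v.
have su3 : sanc u v3 := sanc_trans su2 s23.
have l1 : (L v < L v2)%R := nonTDM_dec H123 nT2 s2v.
have l2 : (L v3 < L u)%R.
  rewrite lt_neqAle (T3 u (sanc_anc su3)) andbT (inj_eq Linj).
  by rewrite eq_sym; apply: sanc_neq.
have l3 : (L u < L v)%R.
  rewrite lt_neqAle c andbT (inj_eq Linj).
  by apply: sanc_neq; apply: anc_sanc_trans a1 (sanc_anc_trans s12 (sanc_anc s2v)).
apply: H2413; exists (fun i => match i with 0 => u | 1 => v2 | 2 => v3 | _ => v end); split.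
  by case=> [|[|[|]]] //.
move=> i j; do 4?[case: i => [|i]] => //; do 4?[case: j => [|j]] => //= _ _; lia.
Qed.

Lemma dirB : avoids parent L [:: 1; 2; 3] ->
  P1_forest parent L -> avoids parent L [:: 2; 4; 1; 3].
Proof.
move=> H123 HP [f [Hs Hl]].
set a := f 0; set b := f 1; set c := f 2; set d := f 3.
have sab : sanc a b := Hs 0 erefl.
have sbc : sanc b c := Hs 1 erefl.
have scd : sanc c d := Hs 2 erefl.
have lca : (L c < L a)%R by rewrite (Hl 2 0).
have lad : (L a < L d)%R by rewrite (Hl 0 3).
have ldb : (L d < L b)%R by rewrite (Hl 3 1).
have Tc : TDM c.
  apply: NNPP => nTc; have := nonTDM_dec H123 nTc scd; lia.
have nTb : ~ TDM b.
  move=> Tb; have := Tb a (sanc_anc sab); lia.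
have nTd : ~ TDM d.
  move=> Td; have := Td c (sanc_anc scd); lia.
have [t [ata tmin]] := @min_ex (fun x => anc x a) L a (anc_refl a).
have Tt : TDM t.
  move=> w awt; apply: tmin; exact: anc_trans awt ata.
have sbd : sanc b d := sanc_trans sbc scd.
have sad : sanc a d := sanc_trans sab sbd.
have atd : anc t d := anc_trans ata (sanc_anc sad).
have hpt : has_pat parent L t d.
  exists t, b, c, d; split; split => //.
  - exact: anc_refl.
  - exact: anc_sanc_trans ata sab.
  - exact: anc_refl.
have spd : special parent L d.
  split=> //; exists t, b, c, d; split; split => //.
  - exact: anc_sanc_trans ata sab.
  - exact: anc_refl.
have [k0 Hk] : exists k, piter k d = Some t by case: atd => k Hk; exists k.
have [k [[u [Hu hpu]] kmin]] :=
  @least (fun k => exists w, piter k d = Some w /\ has_pat parent L w d) k0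
    (ex_intro _ t (conj Hk hpt)).
have aud : anc u d by exists k.
have ceil : ceiling parent L u d.
  split=> //; split=> // w suw awd hpw.
  case: suw => i Hi; case: awd => j Hj.
  have := Hu; have : piter (i.+1 + j) d = Some u by rewrite piter_add Hj.
  move=> H1 H2; have E := @depth_uniq _ _ _ _ H1 H2.
  by apply: (kmin j); [lia | exists w].
have ldu := HP u d spd ceil.
have Tu : TDM u.
  case: hpu => [v1 [v2 [v3 [v4 [[a1 s12 s23 s34 a4v] [T1 T2 T3 T4]]]]]].
  case: (eqVneq u v1) => [->//|ne].
  case: ceil => _ [_ Hc]; exfalso; apply: (Hc v1).
  - have := @anc_neq u v1 a1; apply; exact: ne.
  - exact: anc_trans (sanc_anc (sanc_trans s12 (sanc_trans s23 s34))) a4v.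
  - exists v1, v2, v3, v4; split; split => //; exact: anc_refl.
have atu : anc t u.
  case: (chain atd aud) => // sut.
  by case: ceil => _ [_ Hc]; case: (Hc t sut atd hpt).
have lua : (L u <= L a)%R.
  case: (chain aud (sanc_anc sad)) => [aua|sau].
    exact: le_trans (Tu t atu) (tmin a (anc_refl a)).
  have := Tu a (sanc_anc sau); done.
lia.
Qed.

End Aux.

Theorem lemma3p9 (T : finType) (parent : T -> option T) (L : T -> int) :
  is_forest parent -> injective L ->
  avoids parent L [:: 1; 2; 3] ->
  (avoids parent L [:: 2; 4; 1; 3] <-> P1_forest parent L).
Proof.
move=> Hf Linj H123; split.
  exact: dirA.
exact: dirB.
Qed.
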